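(* Let $S$ be a $d\times d$ symmetric positive semidefinite matrix and $L,U$ symmetric matrices with entries in $\mathbb{R}\cup\{\pm\infty\}$, $L_{ij}\le0\le U_{ij}$ for $i\ne j$ and $L_{ii}=U_{ii}=0$. Let $\widehat K$ be the optimum of minimizing $-\log\det K+\operatorname{tr}(SK)+\sum_{i\neq j}\max\{L_{ij}K_{ij},U_{ij}K_{ij}\}$ over positive definite $K$ (convention $\pm\infty\cdot0=0$), and let $\widehat G$ be the graph on $\{1,\dots,d\}$ with edge $ij$ ($i\neq j$) iff $\widehat K_{ij}\ne0$. For all $(i,j)$ with $\widehat K_{ij}\ne0$ (including $i=j$), define $\widehat S_{ij}=S_{ij}+L_{ij}$ if $\widehat K_{ij}<0$ and $\widehat S_{ij}=S_{ij}+U_{ij}$ if $\widehat K_{ij}>0$. Then $\widehat K$ equals the maximum likelihood estimator in the Gaussian graphical model $M(\widehat G)$ with sufficient statistics $(\widehat S_{ij})$, i.e. the unique positive definite $K$ with $K_{ij}=0$ whenever $i\ne j$ and $ij$ is not an edge of $\widehat G$, and $(K^{-1})_{ij}=\widehat S_{ij}$ whenever $\widehat K_{ij}\ne0$. *)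

(* Defs.v *)
From HB Require Import structures.
From mathcomp Require Import all_boot all_order all_algebra.
From mathcomp Require Import all_classical all_reals.
From mathcomp Require Import exp.
Set Implicit Arguments. Unset Strict Implicit. Unset Printing Implicit Defensive.
Import Order.TTheory GRing.Theory Num.Theory.
Local Open Scope ring_scope.

Section Defs.
Variables (R : realType) (d : nat).

Definition symmetric_mx (T : Type) (A : 'M[T]_d) : Prop := A^T = A.

Definition psd (A : 'M[R]_d) : Prop :=
  symmetric_mx A /\ forall x : 'cV[R]_d, 0 <= (x^T *m A *m x) 0 0.

Definition posdef (A : 'M[R]_d) : Prop :=
  symmetric_mx A /\ forall x : 'cV[R]_d, x != 0 -> 0 < (x^T *m A *m x) 0 0.

(* The penalized objective
   -log det K + tr(S K) + sum_{i<>j} max{L_ij K_ij, U_ij K_ij},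
   valued in extended reals; the ereal product satisfies (+-oo) * 0 = 0. *)
Definition pen_obj (S : 'M[R]_d) (L U : 'M[\bar R]_d) (K : 'M[R]_d) : \bar R :=
  ((- ln (\det K) + \tr (S *m K))%:E
   + \sum_(i < d) \sum_(j < d | i != j)
       Order.max (L i j * (K i j)%:E) (U i j * (K i j)%:E))%E.

Definition support_graph (K : 'M[R]_d) (i j : 'I_d) : bool :=
  (i != j) && (K i j != 0).

(* the statistics \hat S_{ij} (only meaningful where K_ij <> 0) *)
Definition adjusted_stat (S : 'M[R]_d) (L U : 'M[\bar R]_d) (K : 'M[R]_d)
  (i j : 'I_d) : \bar R :=
  if K i j < 0 then ((S i j)%:E + L i j)%E else ((S i j)%:E + U i j)%E.

Definition ggm_mle (G : 'I_d -> 'I_d -> bool) (Sh : 'I_d -> 'I_d -> \bar R)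
  (K : 'M[R]_d) : Prop :=
  [/\ posdef K,
      (forall i j, i != j -> ~~ G i j -> K i j = 0) &
      (forall i j, (i == j) || G i j -> ((invmx K) i j)%:E = Sh i j)].

End Defs.

(* Main.v *)
Require Import Defs.
From HB Require Import structures.
From mathcomp Require Import all_boot all_order all_algebra.
From mathcomp Require Import all_classical all_reals.
From mathcomp Require Import exp.
Import Order.TTheory GRing.Theory Num.Theory.
Local Open Scope ring_scope.
From mathcomp Require Import ring lra zify.


Lemma horner_char (R : comNzRingType) n (A : 'M[R]_n) a :
  (char_poly A).[a] = \det (a%:M - A).
Proof.
rewrite /char_poly /determinant horner_sum; apply: eq_bigr => s _.
rewrite hornerM horner_exp !hornerE; congr (_ * _).
rewrite (big_morph _ (fun p q => hornerM p q a) (hornerC 1 a)).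
by apply: eq_bigr => i _; rewrite !mxE !(hornerE, hornerMn).
Qed.

Lemma det_expand (R : realType) n (M : 'M[R]_n) : exists B : R,
  forall t : R, `|t| <= 1 -> exists r, `|r| <= B /\
  \det (1%:M + t *: M) = 1 + t * \tr M + t ^+ 2 * r.
Proof.
case: n M => [|n'] M.
  exists 0 => t _; exists 0; rewrite normr0 det_mx00 /mxtrace big_ord0; split => //.
  by rewrite mulr0 mulr0 !addr0.
set p := char_poly (- M).
exists (\sum_(i < n') `|p`_i|) => t ht.
case: (eqVneq t 0) => [->|t0].
  exists 0; rewrite normr0; split; first by rewrite sumr_ge0.
  by rewrite scale0r addr0 det1 mul0r mulr0 !addr0.
exists (\sum_(i < n') p`_i * t ^+ (n' - i.+1)); split.
  apply: le_trans (ler_norm_sum _ _ _) _; apply: ler_sum => i _.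
  rewrite normrM normrX ler_piMr //; exact: exprn_ile1.
have e1 : 1%:M + t *: M = t *: (t^-1%:M - (- M)).
  by rewrite opprK scalerDr scale_scalar_mx mulfV.
rewrite e1 detZ -horner_char horner_coef size_char_poly.
rewrite 2!big_ord_recr /=.
have pn : p`_n'.+1 = 1.
  have := char_poly_monic (- M); rewrite -/p => /monicP.
  by rewrite lead_coefE size_char_poly.
have pn1 : p`_n' = \tr M.
  by rewrite (@char_poly_trace _ _ (- M)) // raddfN opprK.
rewrite pn pn1 !mulrDr.
have hB : t ^+ n'.+1 * (1 * t^-1 ^+ n'.+1) = 1.
  by rewrite mul1r exprVn mulfV ?expf_neq0.
have hA : t ^+ n'.+1 * (\tr M * t^-1 ^+ n') = t * \tr M.
  have tn : t ^+ n' != 0 by rewrite expf_neq0.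
  by rewrite exprVn exprS; field.
have hS : \sum_(i < n') t ^+ n'.+1 * (p`_i * t^-1 ^+ i) =
   t ^+ 2 * \sum_(i < n') p`_i * t ^+ (n' - i.+1).
  rewrite mulr_sumr; apply: eq_bigr => i _.
  have Heq : (n'.+1 = (n' - i.+1) + i + 2)%N by have := ltn_ord i; lia.
  rewrite {1}Heq !exprD exprVn.
  have ti : t ^+ i != 0 by rewrite expf_neq0.
  by rewrite mulrC; field.
rewrite -/p hA hB mulr_sumr hS; ring.
Qed.

Lemma small_le0 (R : realFieldType) (x C δ : R) : 0 < δ -> 0 <= C ->
  (forall e, 0 < e -> e < δ -> e <= 1 -> x <= e * C) -> x <= 0.
Proof.
move=> d0 C0 H; rewrite leNgt; apply/negP => x0.
set e := Num.min (δ / 2) (Num.min 1 (x / (C + 1))).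
have e0 : 0 < e.
  rewrite /e !lt_min; apply/andP; split; first lra.
  apply/andP; split; first lra.
  by apply: divr_gt0 => //; lra.
have ed : e < δ by rewrite /e gt_min; apply/orP; left; lra.
have e1 : e <= 1 by rewrite /e !ge_min lexx orbT.
have ex : e <= x / (C + 1) by rewrite /e !ge_min lexx !orbT.
have ex' : e * (C + 1) <= x by rewrite -ler_pdivlMr //; lra.
have := H e e0 ed e1; nra.
Qed.

Lemma stationary (R : realType) n (K H : 'M[R]_n) (b δ : R) :
  K \in unitmx -> 0 < \det K -> 0 < δ ->
  (forall t, `|t| < δ -> 0 < \det (K + t *: H) /\
      ln (\det (K + t *: H)) <= ln (\det K) + t * b) ->
  \tr (invmx K *m H) = b.
Proof.
move=> Ku dK d0 Hopt.
set M := invmx K *m H; set a := \tr M.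
have [B HB] := @det_expand R n M.
have eK t : K + t *: H = K *m (1%:M + t *: M).
  by rewrite mulmxDr mulmx1 -scalemxAr /M mulmxA mulmxV // mul1mx.
have key t : `|t| < δ -> `|t| <= 1 -> t * (a - b) <= t ^+ 2 * (`|a * b| + `|b| * `|B| + `|B|).
  move=> td t1; have [r [rB dE]] := HB t t1.
  have [dpos lnle] := Hopt t td.
  rewrite eK det_mulmx dE in dpos lnle.
  set y := 1 + t * a + t ^+ 2 * r in dpos lnle dE.
  have y0 : 0 < y by rewrite pmulr_rgt0 in dpos.
  rewrite lnM ?posrE // in lnle.
  have lny : ln y <= t * b by lra.
  have h1 : ln (y^-1) <= y^-1 - 1.
    have := @le_ln1Dx R (y^-1 - 1); rewrite (_ : 1 + (y^-1 - 1) = y^-1); last by ring.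
    apply.
    have : 0 < y^-1 by rewrite invr_gt0.
    lra.
  rewrite lnV ?posrE // in h1.
  have h2 : - (t * b) * y <= 1 - y.
    have : - (t * b) <= y^-1 - 1 by lra.
    move=> /(ler_wpM2r (ltW y0)); rewrite mulrBl mulVf ?gt_eqF // mul1r.
    by [].
  have h3 : t * (a - b) <= t ^+ 2 * (a * b + t * b * r - r) by rewrite /y in h2; nra.
  apply: le_trans h3 _; apply: ler_wpM2l; first by rewrite sqr_ge0.
  have rB' : `|r| <= `|B| by apply: le_trans rB (ler_norm _).
  have tb : `|t * b * r| <= `|b| * `|B|.
    rewrite !normrM -mulrA -[X in _ <= X]mul1r.
    apply: ler_pM => //; first by rewrite mulr_ge0.
    by apply: ler_wpM2l.
  have := ler_norm (a * b); have := ler_norm (t * b * r); have := ler_norm (- r).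
  rewrite normrN; lra.
set C := `|a * b| + `|b| * `|B| + `|B|.
have C0 : 0 <= C by rewrite /C !addr_ge0 ?mulr_ge0.
have h : `|a - b| <= 0.
  apply: (@small_le0 R `|a - b| C δ d0 C0) => e e0 ed e1.
  have ep : `|e| = e by rewrite ger0_norm // ltW.
  have en : `|- e| = e by rewrite normrN.
  have k1 := key e ltac:(by rewrite ep) ltac:(by rewrite ep).
  have k2 := key (- e) ltac:(by rewrite en) ltac:(by rewrite en).
  rewrite sqrrN in k2.
  have : `|a - b| * e <= e ^+ 2 * C.
    case: (lerP 0 (a - b)) => hab; [rewrite ger0_norm // mulrC | rewrite ltr0_norm // mulrC]; move: k1 k2; rewrite /C; nra.
  by rewrite expr2 -mulrA mulrC ler_pM2l.
by apply/eqP; rewrite -subr_eq0 -normr_le0.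
Qed.

Lemma qform (R : comNzRingType) n (N : 'M[R]_n) (y : 'cV[R]_n) :
  (y^T *m N *m y) 0 0 = \sum_(l < n) \sum_(k < n) y k 0 * N k l * y l 0.
Proof.
rewrite mxE; apply: eq_bigr => l _; rewrite mxE mulr_suml.
by apply: eq_bigr => k _; rewrite mxE.
Qed.

Lemma sumsq (R : realFieldType) n (y : 'cV[R]_n) :
  (y^T *m y) 0 0 = \sum_(k < n) y k 0 ^+ 2.
Proof. by rewrite mxE; apply: eq_bigr => k _; rewrite mxE expr2. Qed.

Lemma sumsq_gt0 (R : realFieldType) n (y : 'cV[R]_n) : y != 0 ->
  0 < \sum_(k < n) y k 0 ^+ 2.
Proof.
move=> y0; have [k yk] : exists k, y k 0 != 0.
  apply/existsP; apply: contraNT y0; rewrite negb_exists => /forallP H.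
  apply/eqP/matrixP => i j; rewrite (ord1 j) mxE; apply/eqP.
  by have := H i; rewrite negbK.
rewrite (bigD1 k) //=.
have h1 : 0 < y k 0 ^+ 2 by rewrite exprn_even_gt0.
have h2 : 0 <= \sum_(i < n | i != k) y i 0 ^+ 2.
  by rewrite sumr_ge0 // => i _; rewrite sqr_ge0.
lra.
Qed.

Lemma sq_le_sum (R : realFieldType) n (y : 'cV[R]_n) k :
  y k 0 ^+ 2 <= \sum_(k < n) y k 0 ^+ 2.
Proof.
rewrite (bigD1 k) //= lerDl sumr_ge0 // => i _; exact: sqr_ge0.
Qed.

Lemma qform_bound (R : realFieldType) n (N : 'M[R]_n) (y : 'cV[R]_n) :
  `|(y^T *m N *m y) 0 0| <= (\sum_(l < n) \sum_(k < n) `|N k l|) * (2 * \sum_(k < n) y k 0 ^+ 2).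
Proof.
rewrite qform mulr_suml; apply: le_trans (ler_norm_sum _ _ _) _.
apply: ler_sum => l _; rewrite mulr_suml.
apply: le_trans (ler_norm_sum _ _ _) _; apply: ler_sum => k _.
rewrite !normrM mulrAC mulrC; apply: ler_wpM2l => //.
have h1 := @sq_le_sum _ _ y k; have h2 := @sq_le_sum _ _ y l.
have : `|y k 0| * `|y l 0| <= y k 0 ^+ 2 + y l 0 ^+ 2.
  rewrite -[y k 0 ^+ 2]real_normK ?num_real // -[y l 0 ^+ 2]real_normK ?num_real //.
  have := normr_ge0 (y k 0); have := normr_ge0 (y l 0); nra.
lra.
Qed.

Lemma qdelta (R : comNzRingType) n (B : 'M[R]_n) k :
  (((delta_mx k (0 : 'I_1) : 'cV[R]_n)^T *m B) *m (delta_mx k (0 : 'I_1) : 'cV[R]_n)) 0 0 = B k k.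
Proof. by rewrite trmx_delta -rowE -colE !mxE. Qed.

Lemma chol (R : realType) n (B : 'M[R]_n) : posdef B ->
  exists C : 'M[R]_n, C \in unitmx /\ B = C^T *m C.
Proof.
elim: n B => [|n IH] B [Bsym Bpos].
  exists 1%:M; split; first exact: unitmx1.
  by rewrite [B]flatmx0 [_ *m _]flatmx0.
pose B' : 'M[R]_(1 + n) := B.
set a := B 0 0.
set b := dlsubmx B'.
set D := drsubmx B'.
have a0 : 0 < a.
  rewrite /a -(@qdelta _ _ B); apply: Bpos.
  by apply/negP => /eqP/matrixP/(_ 0 0); rewrite !mxE eqxx /= => /eqP; rewrite oner_eq0.
have hB : B' = block_mx a%:M b^T b D.
  rewrite -[LHS]submxK; congr block_mx.
  - rewrite [LHS]mx11_scalar; congr (_%:M); rewrite !mxE; congr (B _ _); exact: val_inj.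
  - by rewrite /b trmx_dlsub; congr ursubmx.
have Dsym : D^T = D.
  have Bsym' : B'^T = B' := Bsym.
  by move: Bsym'; rewrite hB tr_block_mx => /eq_block_mx [_ _ _].
set D' := D - a^-1 *: (b *m b^T).
have D'pd : posdef D'.
  split.
    by rewrite /symmetric_mx /D' raddfB /= linearZ /= trmx_mul trmxK Dsym.
  move=> z z0.
  set beta := (b^T *m z) 0 0.
  have e1 : b^T *m z = beta%:M by rewrite [LHS]mx11_scalar.
  have e2 : z^T *m b = beta%:M.
    by rewrite -[b]trmxK -trmx_mul e1 tr_scalar_mx.
  set w : 'cV[R]_1 := (- a^-1 * beta)%:M.
  have x0 : col_mx w z != 0 by rewrite col_mx_eq0 negb_and z0 orbT.
  have H0 := Bpos (col_mx w z) x0.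
  have : 0 < (((col_mx w z : 'M_(1 + n, 1))^T *m B') *m (col_mx w z : 'M_(1 + n, 1))) 0 0 := H0.
  clear H0.
  rewrite hB tr_col_mx mul_row_block mul_row_col tr_scalar_mx.
  rewrite !mulmxDl e2 -(mulmxA _ b^T z) e1 /w !mul_scalar_mx !scale_scalar_mx.
  rewrite !mul_scalar_mx !scale_scalar_mx.
  rewrite /D' mulmxBr mulmxBl -scalemxAr -scalemxAl !mulmxA -(mulmxA (z^T *m b)) e1 e2.
  rewrite mul_scalar_mx scale_scalar_mx.
  rewrite !mxE /= !mulr1n.
  have : a != 0 by rewrite gt_eqF.
  move=> an0 H; apply: lt_le_trans H _; rewrite le_eqVlt; apply/orP; left; apply/eqP.
  by field.
have [C' [C'u C'e]] := IH D' D'pd.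
set s := Num.sqrt a.
have s0 : 0 < s by rewrite sqrtr_gt0.
have ss : s * s = a by rewrite -expr2 sqr_sqrtr // ltW.
exists (block_mx (s%:M : 'M_1) (s^-1 *: b^T) 0 C' : 'M_(1 + n)); split.
  rewrite unitmxE (det_ublock (s%:M : 'M_1)) det_scalar1 unitrM unitfE gt_eqF //=.
change (B' = (block_mx (s%:M : 'M_1) (s^-1 *: b^T) 0 C')^T *m
   (block_mx (s%:M : 'M_1) (s^-1 *: b^T) 0 C')).
rewrite hB tr_block_mx mulmx_block !trmx0 !mul0mx !mulmx0 !addr0.
have tz (c : R) (X : 'M[R]_(1, n)) : (c *: X)^T = c *: X^T.
  by apply/matrixP => i j; rewrite !mxE.
rewrite !tz trmxK tr_scalar_mx; congr block_mx.
- by rewrite mul_scalar_mx scale_scalar_mx ss.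
- by rewrite mul_scalar_mx scalerA mulfV ?gt_eqF // scale1r.
- by rewrite mul_mx_scalar scalerA mulfV ?gt_eqF // scale1r.
- rewrite -scalemxAl -scalemxAr scalerA -invfM ss -C'e /D'.
  by rewrite addrC subrK.
Qed.


Lemma posdef_unit (R : realType) n (K : 'M[R]_n) : posdef K ->
  K \in unitmx /\ 0 < \det K.
Proof.
move=> /chol [C [Cu ->]]; rewrite det_mulmx det_tr -expr2.
split; last by rewrite exprn_even_gt0 //= -unitfE -unitmxE.
by rewrite unitmx_mul unitmx_tr Cu.
Qed.

Lemma posdef1 (R : realType) n : posdef (1%:M : 'M[R]_n).
Proof.
split; first by rewrite /symmetric_mx trmx1.
by move=> x x0; rewrite mulmx1 sumsq sumsq_gt0.
Qed.

Lemma posdef_perturb (R : realType) n (K H : 'M[R]_n) : posdef K -> H^T = H ->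
  exists2 δ : R, 0 < δ & forall t, `|t| < δ -> posdef (K + t *: H).
Proof.
move=> Kpd Hs; have [C [Cu CK]] := @chol _ _ _ Kpd.
set E := invmx C; set N := E^T *m H *m E.
set m := \sum_(l < n) \sum_(k < n) `|N k l|.
have m0 : 0 <= m by rewrite sumr_ge0 // => l _; rewrite sumr_ge0.
exists (2 * m + 1)^-1; first by rewrite invr_gt0; lra.
move=> t ht; split.
  rewrite /symmetric_mx raddfD /=.
  have -> : (t *: H)^T = t *: H^T by apply/matrixP => i j; rewrite !mxE.
  by rewrite Hs Kpd.1.
move=> x x0; set y := C *m x.
have xE : x = E *m y by rewrite /y mulmxA mulVmx // mul1mx.
have y0 : y != 0.
  by apply: contraNneq x0 => y0; rewrite xE y0 mulmx0.
have q1 : (x^T *m K *m x) 0 0 = \sum_(k < n) y k 0 ^+ 2.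
  by rewrite CK -sumsq /y trmx_mul !mulmxA.
have q2 : (x^T *m H *m x) = y^T *m N *m y.
  by rewrite xE trmx_mul /N !mulmxA.
have -> : (x^T *m (K + t *: H) *m x) 0 0 =
   (x^T *m K *m x) 0 0 + t * (x^T *m H *m x) 0 0.
  by rewrite mulmxDr mulmxDl -scalemxAr -scalemxAl !mxE.
rewrite q1 q2; have hb := @qform_bound _ _ N y.
have hs := @sumsq_gt0 _ _ _ y0.
set s := \sum_(k < n) y k 0 ^+ 2 in hb hs *.
set q := (y^T *m N *m y) 0 0 in hb *.
have htm : `|t| * (2 * m + 1) < 1 by rewrite -ltr_pdivlMr ?mul1r //; lra.
have : `|t * q| <= `|t| * (m * (2 * s)).
  by rewrite normrM; apply: ler_wpM2l.
have := ler_norm (- (t * q)); rewrite normrN.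
have := normr_ge0 t.
nra.
Qed.

Lemma posdef_inv (R : realType) n (K : 'M[R]_n) : posdef K -> posdef (invmx K).
Proof.
move=> Kpd; have [Ku _] := @posdef_unit _ _ _ Kpd.
have Ss : (invmx K)^T = invmx K by rewrite trmx_inv Kpd.1.
split => // x x0.
have h : x^T *m invmx K *m x = (invmx K *m x)^T *m K *m (invmx K *m x).
  by rewrite trmx_mul Ss -!mulmxA [K *m (_ *m _)]mulmxA mulmxV // mul1mx.
rewrite h; apply: Kpd.2.
apply: contraNneq x0 => e; by rewrite -[x](mulKVmx Ku) e mulmx0.
Qed.

Lemma trace_zero (R : realType) n (S F : 'M[R]_n) : posdef S ->
  \tr (F^T *m S *m F) = 0 -> F = 0.
Proof.
move=> Spd.
have E k : (F^T *m S *m F) k k = ((col k F)^T *m S *m col k F) 0 0.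
  by rewrite -qdelta colE trmx_mul !mulmxA.
have ge k : 0 <= (F^T *m S *m F) k k.
  rewrite E; case: (eqVneq (col k F) 0) => [->|c0].
    by rewrite mulmx0 mxE.
  exact: ltW (Spd.2 _ c0).
rewrite /mxtrace => /eqP; rewrite psumr_eq0 => [/allP H|k _]; last exact: ge.
apply/matrixP => i k; rewrite mxE.
have := H k (mem_index_enum k); rewrite /= E => /eqP q0.
case: (eqVneq (col k F) 0) => [/matrixP/(_ i 0)|c0].
  by rewrite !mxE.
by have := Spd.2 _ c0; rewrite q0 ltxx.
Qed.

Lemma tr_delta (R : comNzRingType) n (A : 'M[R]_n) i j :
  \tr (A *m delta_mx i j) = A j i.
Proof.
rewrite /mxtrace (bigD1 j) //= big1 ?addr0 => [|k kj].
  rewrite mxE (bigD1 i) //= big1 ?addr0 => [|l li].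
    by rewrite mxE !eqxx mulr1.
  by rewrite mxE (negbTE li) mulr0.
rewrite mxE big1 // => l _; rewrite mxE (negbTE kj) andbF mulr0 //.
Qed.


Arguments posdef_unit {R n K}.
Arguments posdef_perturb {R n K H}.
Arguments posdef_inv {R n K}.
Arguments trace_zero {R n S F}.
Arguments chol {R n B}.
Arguments tr_delta {R n}.

Definition penP (R : realType) d (L U : 'M[\bar R]_d) (X : 'M[R]_d) : \bar R :=
  (\sum_(i < d) \sum_(j < d | i != j)
       Order.max (L i j * (X i j)%:E) (U i j * (X i j)%:E))%E.

Arguments penP {R d}.

Lemma pen_objE (R : realType) d (S : 'M[R]_d) L U X :
  pen_obj S L U X = ((- ln (\det X) + \tr (S *m X))%:E + penP L U X)%E.
Proof. by []. Qed.

Lemma gterm_ge0 (R : realType) (l u : \bar R) (x : R) : (l <= 0)%E -> (0 <= u)%E ->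
  (0 <= Order.max (l * x%:E) (u * x%:E))%E.
Proof.
move=> l0 u0; rewrite le_max; case: (lerP 0 x) => x0.
  by apply/orP; right; apply: mule_ge0 => //; rewrite lee_fin.
by apply/orP; left; apply: mule_le0 => //; rewrite lee_fin ltW.
Qed.

Lemma gform (R : realType) (l u : \bar R) (x : R) : (l <= 0)%E -> (0 <= u)%E -> x != 0 ->
  (Order.max (l * x%:E) (u * x%:E))%E \is a fin_num ->
  exists c : R, (if x < 0 then l else u) = c%:E /\
    forall y : R, 0 < y * x -> (Order.max (l * y%:E) (u * y%:E))%E = (c * y)%:E.
Proof.
move=> l0 u0 x0 fin.
case: ltrP => xneg.
  case: l l0 fin => [c| |] l0 fin.
  - exists c; split => // y yx.
    have yneg : y < 0 by nra.
    rewrite max_l -?EFinM //; apply: (@le_trans _ _ 0%E).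
      by apply: mule_ge0_le0 => //; rewrite lee_fin ltW.
    by rewrite lee_fin; move: l0; rewrite lee_fin; nra.
  - by [].
  - by move: fin; rewrite mulNyr ltr0_sg // mulN1e /= max_l ?leey.
have xpos : 0 < x by rewrite lt_neqAle eq_sym x0.
case: u u0 fin => [c| |] u0 fin.
- exists c; split => // y yx.
  have ypos : 0 < y by nra.
  rewrite max_r -?EFinM //; apply: (@le_trans _ _ 0%E).
    by apply: mule_le0_ge0 => //; rewrite lee_fin ltW.
  by rewrite lee_fin; move: u0; rewrite lee_fin; nra.
- by move: fin; rewrite mulyr gtr0_sg // mul1e /= max_r ?leey.
- by [].
Qed.

Lemma penP1 (R : realType) d (L U : 'M[\bar R]_d) : penP L U 1%:M = 0%E.
Proof.
rewrite /penP big1 // => i _; rewrite big1 // => j ij.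
by rewrite mxE (negbTE ij) mulr0n mule0 mule0 maxxx.
Qed.

Lemma from_min (R : realType) d (S : 'M[R]_d) (L U : 'M[\bar R]_d) (K H : 'M[R]_d) (s δ0 : R) :
  posdef K -> H^T = H -> 0 < δ0 ->
  (forall X, posdef X -> (pen_obj S L U K <= pen_obj S L U X)%E) ->
  penP L U K \is a fin_num ->
  (forall t, `|t| < δ0 -> penP L U (K + t *: H) = ((t * s)%:E + penP L U K)%E) ->
  \tr (invmx K *m H) = \tr (S *m H) + s.
Proof.
move=> Kpd Hs d0 Hmin Pfin Hpert.
have [δ1 d1 Hpd] := posdef_perturb Kpd Hs.
have [Ku dK] := posdef_unit Kpd.
apply: (@stationary _ _ _ _ _ (Num.min δ0 δ1) Ku dK).
  by rewrite lt_min d0 d1.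
move=> t; rewrite lt_min => /andP [t0 t1].
have Xpd := Hpd t t1; have [_ dX] := posdef_unit Xpd; split => //.
have := Hmin _ Xpd; rewrite !pen_objE Hpert // addeA -EFinD leeD2rE // lee_fin.
rewrite mulmxDr -scalemxAr mxtraceD mxtraceZ mulrDr; lra.
Qed.

Lemma pen_fin (R : realType) d (S : 'M[R]_d) (L U : 'M[\bar R]_d) (K : 'M[R]_d) :
  (forall i j : 'I_d, i != j -> (L i j <= 0)%E /\ (0 <= U i j)%E) ->
  (forall X, posdef X -> (pen_obj S L U K <= pen_obj S L U X)%E) ->
  penP L U K \is a fin_num.
Proof.
move=> HLU Hmin.
have h := Hmin _ (posdef1 _ _); rewrite !pen_objE penP1 adde0 in h.
have P0 : (0 <= penP L U K)%E.
  apply: sume_ge0 => i _; apply: sume_ge0 => j ij.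
  by have [l0 u0] := HLU i j ij; apply: gterm_ge0.
move: h P0; case: (penP L U K) => //.
Qed.


Lemma symE (T : Type) n (A : 'M[T]_n) : A^T = A -> forall i j, A j i = A i j.
Proof. by move=> hA i j; rewrite -[in LHS]hA mxE. Qed.

Arguments symE {T n A}.

Lemma sum_ind2 (R : realType) d (i j : 'I_d) : i != j ->
  \sum_(k < d) \sum_(l < d | k != l) ((k == i) && (l == j))%:R = 1 :> R.
Proof.
move=> ij; rewrite (bigD1 i) //= (bigD1 j) //= !eqxx /= big1 => [|l /andP [_ lj]].
  rewrite addr0 big1 ?addr0 // => k ki; rewrite big1 // => l _.
  by rewrite (negbTE ki).
by rewrite (negbTE lj).
Qed.

Lemma sign_pert (R : realType) (x t : R) : x != 0 -> `|t| < `|x| -> 0 < (x + t) * x.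
Proof.
move=> x0 ht; have := ler_norm t; have := ler_norm (- t); rewrite normrN.
case: (ltrP x 0) => hx; first rewrite (ltr0_norm hx) in ht.
  move=> h1 h2; rewrite -mulrNN; apply: mulr_gt0; lra.
have hx' : 0 < x by rewrite lt_neqAle eq_sym x0.
rewrite (ger0_norm hx) in ht; move=> h1 h2; apply: mulr_gt0; lra.
Qed.

Theorem corollary8p10 (R : realType) (d : nat) (S : 'M[R]_d)
  (L U : 'M[\bar R]_d) (Khat : 'M[R]_d) :
  psd S -> symmetric_mx L -> symmetric_mx U ->
  (forall i j : 'I_d, i != j -> (L i j <= 0)%E /\ (0 <= U i j)%E) ->
  (forall i : 'I_d, L i i = 0%E /\ U i i = 0%E) ->
  posdef Khat ->
  (forall K : 'M[R]_d, posdef K -> (pen_obj S L U Khat <= pen_obj S L U K)%E) ->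
  ggm_mle (support_graph Khat) (adjusted_stat S L U Khat) Khat /\
  (forall K : 'M[R]_d,
     ggm_mle (support_graph Khat) (adjusted_stat S L U Khat) K -> K = Khat).
Proof.
move=> Spsd Lsym Usym HLU Hd Kpd Hmin.
have [Ku dK] := posdef_unit Kpd.
have Pfin := @pen_fin _ _ S L U Khat HLU Hmin.
have Ssym := symE Spsd.1; have Lsym' := symE Lsym; have Usym' := symE Usym.
have Ksym := symE Kpd.1.
have stat : forall i j, (i == j) || support_graph Khat i j ->
    ((invmx Khat) i j)%:E = adjusted_stat S L U Khat i j.
  move=> i j /orP [/eqP <- | /andP [ij Kij]].
  - set H := delta_mx i i : 'M[R]_d.
    have Hs : H^T = H by rewrite trmx_delta.
    have := @from_min _ _ S L U Khat H 0 1 Kpd Hs ltr01 Hmin Pfin.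
    rewrite !tr_delta addr0 => ->.
      have Kii : 0 < Khat i i.
        rewrite -(@qdelta _ _ Khat i); apply: Kpd.2.
        apply/negP => /eqP/matrixP/(_ i 0); rewrite !mxE !eqxx /= => /eqP.
        by rewrite oner_eq0.
      by rewrite /adjusted_stat ltNge (ltW Kii) /= (Hd i).2 adde0.
    move=> t _; rewrite mulr0 add0e; apply: eq_bigr => k _; apply: eq_bigr => l kl.
    rewrite !mxE; case: (eqVneq i k) => [ik|] /=; last by rewrite mulr0 addr0.
    by rewrite -ik in kl; rewrite eq_sym (negbTE kl) mulr0 addr0.
  - set H := (delta_mx i j + delta_mx j i) : 'M[R]_d.
    have Hs : H^T = H by rewrite raddfD /= !trmx_delta addrC.
    have tfin : (Order.max (L i j * (Khat i j)%:E) (U i j * (Khat i j)%:E))%E \is a fin_num.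
      move/sum_fin_numP: Pfin => /(_ i (mem_index_enum i) isT) /sum_fin_numP.
      by move=> /(_ j (mem_index_enum j) ij).
    have [l0 u0] := HLU i j ij.
    have [c [hc hy]] := @gform _ _ _ _ l0 u0 Kij tfin.
    have d0 : 0 < `|Khat i j| by rewrite normr_gt0.
    have := @from_min _ _ S L U Khat H (2 * c) `|Khat i j| Kpd Hs d0 Hmin Pfin.
    have Vsym : (invmx Khat)^T = invmx Khat by rewrite trmx_inv Kpd.1.
    rewrite !mulmxDr !mxtraceD !tr_delta Ssym (symE Vsym).
    have hH k l : H k l = ((k == i) && (l == j))%:R + ((k == j) && (l == i))%:R.
      by rewrite /H !mxE.
    have Hij : H i j = 1 by rewrite hH !eqxx (negbTE ij) /= addr0.
    have Hji : H j i = 1 by rewrite hH !eqxx (eq_sym j i) (negbTE ij) /= add0r.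
    have termE t : `|t| < `|Khat i j| -> forall k l, k != l ->
      (Order.max (L k l * ((Khat + t *: H) k l)%:E) (U k l * ((Khat + t *: H) k l)%:E))%E =
      (Order.max (L k l * (Khat k l)%:E) (U k l * (Khat k l)%:E) + ((c * t) * H k l)%:E)%E.
      move=> ht k l kl; rewrite [(Khat + _) k l]mxE [(t *: H) k l]mxE.
      have main : (Order.max (L i j * (Khat i j + t)%:E) (U i j * (Khat i j + t)%:E))%E =
          (Order.max (L i j * (Khat i j)%:E) (U i j * (Khat i j)%:E) + (c * t)%:E)%E.
        rewrite hy ?hy; do ?[ by rewrite -EFinD mulrDr | exact: (@sign_pert R _ _ Kij ht) |
           by rewrite -expr2 exprn_even_gt0 ].
      case: (eqVneq k i) => [ki|ki].
        subst k; case: (eqVneq l j) => [lj|lj].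
          by subst l; rewrite Hij !mulr1.
        rewrite hH eqxx (negbTE lj) (negbTE ij) /=.
        by rewrite addr0 !mulr0 addr0 adde0.
      case: (eqVneq k j) => [kj|kj].
        subst k; case: (eqVneq l i) => [li|li].
          by subst l; rewrite Hji !mulr1 Lsym' Usym' Ksym.
        rewrite hH eqxx (negbTE li) (eq_sym j i) (negbTE ij) /=.
        by rewrite addr0 !mulr0 addr0 adde0.
      rewrite hH (negbTE ki) (negbTE kj) /=.
      by rewrite addr0 !mulr0 addr0 adde0.
    move=> /(_ _) H1.
    have {H1} : invmx Khat j i + invmx Khat j i = S i j + S i j + 2 * c.
      apply: H1 => t ht; rewrite /penP.
      rewrite (eq_bigr (fun k => \sum_(l < d | k != l)
          (Order.max (L k l * (Khat k l)%:E) (U k l * (Khat k l)%:E) + ((c * t) * H k l)%:E)%E));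
        last by move=> k _; apply: eq_bigr => l kl; apply: termE.
      under eq_bigr do rewrite big_split /=.
      rewrite big_split /= addeC; congr (_ + _)%E.
      under eq_bigr do rewrite sumEFin.
      rewrite sumEFin; congr (_%:E).
      under eq_bigr do rewrite -mulr_sumr.
      rewrite -mulr_sumr.
      under eq_bigr do under eq_bigr do rewrite hH.
      under eq_bigr do rewrite big_split /=.
      by rewrite big_split /= !sum_ind2 // 1?eq_sym //; ring.
    move=> h; rewrite /adjusted_stat -fun_if hc -EFinD; congr (_%:E); lra.
have Vsym : (invmx Khat)^T = invmx Khat by rewrite trmx_inv Kpd.1.
split.
  split => //; first by move=> i j ij; rewrite /support_graph ij /= negbK => /eqP.
move=> K2 [K2pd K2z K2s].
have [K2u _] := posdef_unit K2pd.
set V := invmx Khat; set V2 := invmx K2; set D := K2 - Khat.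
have Dsym : D^T = D by rewrite /D raddfB /= K2pd.1 Kpd.1.
have hD k l : ~~ ((l == k) || support_graph Khat l k) -> D l k = 0.
  rewrite negb_or => /andP [lk sg].
  have K0 : Khat l k = 0 by move: sg; rewrite /support_graph lk /= negbK => /eqP.
  by rewrite /D !mxE K2z // K0 subr0.
have hV k l : (k == l) || support_graph Khat k l -> V k l = V2 k l.
  move=> h; apply: EFin_inj; rewrite stat // K2s //.
have htr : \tr ((V - V2) *m D) = 0.
  rewrite /mxtrace big1 // => k _; rewrite mxE big1 // => l _.
  case: (boolP ((l == k) || support_graph Khat l k)) => h; last by rewrite hD // mulr0.
  have h' : (k == l) || support_graph Khat k l.
    case/orP: h => [/eqP ->|/andP [lk Klk]]; first by rewrite eqxx.
    by apply/orP; right; rewrite /support_graph eq_sym lk Ksym.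
  by rewrite !mxE hV // subrr mul0r.
have hdiff : V - V2 = V *m D *m V2.
  rewrite /D mulmxBr mulmxBl -mulmxA mulmxV // mulmx1 /V mulVmx // mul1mx //.
rewrite hdiff in htr.
have [C [Cu CK]] := chol K2pd.
set E := invmx C.
have V2E : V2 = E *m E^T.
  have h1 : E *m E^T *m K2 = 1%:M.
    by rewrite CK !mulmxA -(mulmxA E) -trmx_mul mulmxV // trmx1 mulmx1 mulVmx.
  by rewrite -[V2]mul1mx -h1 -mulmxA /V2 mulmxV // mulmx1.
have e : \tr (V *m D *m V2 *m D) = \tr ((D *m E)^T *m V *m (D *m E)).
  transitivity (\tr ((V *m D *m E) *m (E^T *m D))); first by rewrite V2E !mulmxA.
  by rewrite mxtrace_mulC trmx_mul Dsym !mulmxA.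
have F0 : D *m E = 0.
  by apply: (trace_zero (posdef_inv Kpd)); rewrite -e.
have : D = 0 by rewrite -[D]mulmx1 -(mulVmx Cu) mulmxA F0 mul0mx.
by move/eqP; rewrite subr_eq0 => /eqP.
Qed.
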